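(* Let $n \geq 2$, $R > 0$, and let $m$ be a uniform (rotation-invariant) measure on $S^{n-1}_R = \{x\in\mathbb{R}^n : \|x\|=R\}$, normalized or not. Let $\Psi:\mathbb{R}\to\mathbb{R}$ be convex and uniformly continuous, let $f:S^{n-1}_R\to[0,1]$ be integrable, and let $K:\mathbb{R}\to\mathbb{R}$ be non-decreasing, bounded and measurable. For $g: S^{n-1}_R \to \mathbb{R}$ write $Kg(x) = \int_{S^{n-1}_R} K(\langle x,y\rangle) g(y)\,dm(y)$. Then for every hyperplane $\sigma$ through the origin that does not contain $r = (R,0,\ldots,0)$, \[ \int_{S^{n-1}_R} \Psi(Kf(x))\,dm(x) \leq \int_{S^{n-1}_R} \Psi(Kf^{\sigma}(x))\,dm(x). \]
   Context: For a hyperplane $\sigma$ through the origin not containing $r$, let $v$ be the unit normal vector of $\sigma$ with $\langle v, r\rangle > 0$; let $H^+_\sigma = \{x \in S^{n-1}_R : \langle x,v\rangle \geq 0\}$ (the hemisphere containing $r$) and $H^-_\sigma = \{x\in S^{n-1}_R : \langle x, v\rangle < 0\}$. For $x \in S^{n-1}_R$, $\sigma x$ denotes the reflection of $x$ across $\sigma$. The polarization of $f$ with respect to $\sigma$ is $f^\sigma(x) = \max\{f(x), f(\sigma x)\}$ if $x \in H^+_\sigma$ and $f^\sigma(x) = \min\{f(x), f(\sigma x)\}$ if $x\in H^-_\sigma$. *)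

(* Defs.v *)
From HB Require Import structures.
From mathcomp Require Import all_boot all_order all_algebra.
From mathcomp Require Import all_classical all_reals all_analysis.
Set Implicit Arguments. Unset Strict Implicit. Unset Printing Implicit Defensive.
Import numFieldNormedType.Exports.
Import Order.TTheory GRing.Theory Num.Theory.
Local Open Scope classical_set_scope.
Local Open Scope ring_scope.

(* R^n as row vectors, equipped with its Borel sigma-algebra (generated by the
   open sets of the product topology of 'rV[R]_n). *)
Definition Rn (R : realType) (n : nat) :=
  g_sigma_algebraType (@open 'rV[R]_n).

Definition dotp (R : realType) (n : nat) (x y : 'rV[R]_n) : R :=
  \sum_(i < n) x ord0 i * y ord0 i.

Definition sphere (R : realType) (n : nat) (rad : R) : set (Rn R n) :=
  [set x : Rn R n | Num.sqrt (dotp x x) = rad].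

Definition north (R : realType) (k : nat) (rad : R) : 'rV[R]_k.+1 :=
  \row_(i < k.+1) (if i == ord0 then rad else 0).

Definition orthogonal_mx (R : realType) (n : nat) (Q : 'M[R]_n) : Prop :=
  Q *m Q^T = 1%:M.

(* m is uniform (rotation-invariant) on the sphere: invariant under every
   orthogonal map, acting on Borel subsets of the sphere. *)
Definition rotation_invariant_on (R : realType) (n : nat) (S : set (Rn R n))
    (m : set (Rn R n) -> \bar R) : Prop :=
  forall (Q : 'M[R]_n), orthogonal_mx Q ->
  forall A : set (Rn R n), measurable A -> A `<=` S ->
    m ((fun x : Rn R n => (x *m Q : Rn R n)) @^-1` A `&` S) = m A.

Definition convex_fun (R : realType) (Psi : R -> R) : Prop :=
  forall (x y t : R), 0 <= t <= 1 ->
    Psi (t * x + (1 - t) * y) <= t * Psi x + (1 - t) * Psi y.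

(* Reflection across the hyperplane sigma = v^perp (v a unit vector). *)
Definition reflect_hyp (R : realType) (n : nat) (v x : 'rV[R]_n) : 'rV[R]_n :=
  x - (2 * dotp x v) *: v.

(* Polarization of f w.r.t. the hyperplane with unit normal v, where v is the
   normal with <v, r> > 0, so H^+ = {<x,v> >= 0}. *)
Definition polarization (R : realType) (n : nat) (v : 'rV[R]_n)
    (f : 'rV[R]_n -> R) (x : 'rV[R]_n) : R :=
  if 0 <= dotp x v then Num.max (f x) (f (reflect_hyp v x))
  else Num.min (f x) (f (reflect_hyp v x)).

Definition Kop (R : realType) (n : nat) (S : set (Rn R n))
    (m : {measure set (Rn R n) -> \bar R}) (K : R -> R)
    (g : Rn R n -> R) (x : Rn R n) : R :=
  Rintegral m S (fun y => K (dotp x y) * g y).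

(* Main.v *)
Require Import Defs.
From HB Require Import structures.
From mathcomp Require Import all_boot all_order all_algebra.
From mathcomp Require Import all_classical all_reals all_analysis.
From mathcomp Require Import ring lra measurable_realfun.
Import Order.TTheory GRing.Theory Num.Theory.
Import numFieldNormedType.Exports.
Local Open Scope classical_set_scope.
Local Open Scope ring_scope.
Section Alg.
Context (R : realType) (n : nat).
Implicit Types x y z v : 'rV[R]_n.

Lemma dotpC x y : dotp x y = dotp y x.
Proof. by apply: eq_bigr => i _; rewrite mulrC. Qed.

Lemma dotpDl x y z : dotp (x + y) z = dotp x z + dotp y z.
Proof. by rewrite /dotp -big_split; apply: eq_bigr => i _; rewrite mxE mulrDl. Qed.

Lemma dotpZl a x y : dotp (a *: x) y = a * dotp x y.
Proof. by rewrite /dotp mulr_sumr; apply: eq_bigr => i _; rewrite mxE mulrA. Qed.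

Lemma dotpNl x y : dotp (- x) y = - dotp x y.
Proof. by rewrite -scaleN1r dotpZl mulN1r. Qed.

Lemma dotpBl x y z : dotp (x - y) z = dotp x z - dotp y z.
Proof. by rewrite dotpDl dotpNl. Qed.

Lemma dotp_refl_l v x y :
  dotp (reflect_hyp v x) y = dotp x y - 2 * dotp x v * dotp v y.
Proof. by rewrite /reflect_hyp dotpBl dotpZl. Qed.

Lemma dotp_refl_sym v x y :
  dotp (reflect_hyp v x) y = dotp x (reflect_hyp v y).
Proof.
rewrite dotp_refl_l [RHS]dotpC dotp_refl_l (dotpC y x) (dotpC v x) (dotpC y v).
by rewrite -!mulrA (mulrC (dotp v y)).
Qed.

Lemma refl_v v x : dotp v v = 1 -> dotp (reflect_hyp v x) v = - dotp x v.
Proof. by move=> hv; rewrite dotp_refl_l hv mulr1; lra. Qed.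

Lemma reflK v x : dotp v v = 1 -> reflect_hyp v (reflect_hyp v x) = x.
Proof.
move=> hv; rewrite {1}/reflect_hyp refl_v // /reflect_hyp.
by rewrite mulrN scaleNr opprK subrK.
Qed.

Lemma dotp_refl2 v x y : dotp v v = 1 ->
  dotp (reflect_hyp v x) (reflect_hyp v y) = dotp x y.
Proof. by move=> hv; rewrite dotp_refl_sym reflK. Qed.

End Alg.
Section Mx.
Context (R : realType) (n : nat).
Implicit Types x y z v : 'rV[R]_n.

Lemma mul_tr x v : x *m v^T = (dotp x v)%:M.
Proof.
apply/matrixP => i j; rewrite !mxE (ord1 i) (ord1 j) /= mulr1n.
by apply: eq_bigr => k _; rewrite mxE.
Qed.

Definition reflQ v : 'M[R]_n := 1%:M - 2 *: (v^T *m v).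

Lemma refl_mx v x : reflect_hyp v x = x *m reflQ v.
Proof.
rewrite /reflQ mulmxBr mulmx1 -scalemxAr mulmxA mul_tr mul_scalar_mx.
by rewrite /reflect_hyp scalerA.
Qed.

Lemma reflQ_orth v : dotp v v = 1 -> orthogonal_mx (reflQ v).
Proof.
move=> hv; rewrite /orthogonal_mx.
have -> : (reflQ v)^T = reflQ v.
  by rewrite /reflQ linearB /= linearZ /= trmx1 trmx_mul trmxK.
have PP : (v^T *m v) *m (v^T *m v) = v^T *m v.
  by rewrite mulmxA -(mulmxA v^T) mul_tr hv mulmx1.
rewrite /reflQ mulmxBl mul1mx !mulmxBr mulmx1 -!scalemxAl -!scalemxAr PP.
rewrite scalerA opprB addrA; set P := v^T *m v.
rewrite -addrA -scalerBl (_ : 2 * 2 - 2 = 2 :> R); last by lra.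
by rewrite subrK.
Qed.

End Mx.
Section Meas.
Context (R : realType) (n : nat).

Lemma meas_cont (c : 'rV[R]_n -> R) : continuous c ->
  measurable_fun [set: Rn R n] (c : Rn R n -> R).
Proof.
move=> cc; apply: (measurability _ (measurable_realfun.RGenOInfty.measurableE R)) => //.
move=> _ [_ [a ->] <-]; rewrite setTI; apply: sub_sigma_algebra.
by apply: (proj1 (continuousP c)) => //; exact: interval_open.
Qed.

Lemma meas_cont_Rn (c : 'rV[R]_n -> 'rV[R]_n) : continuous c ->
  measurable_fun [set: Rn R n] (c : Rn R n -> Rn R n).
Proof.
move=> cc; apply: (@measurability _ _ (Rn R n) (Rn R n) setT c (@open 'rV[R]_n)) => //.
move=> _ [A oA <-]; rewrite setTI; apply: sub_sigma_algebra.
exact: (proj1 (continuousP c)).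
Qed.

Lemma cont_sum (T : topologicalType) (I : Type) (s : seq I) (F : I -> T -> R) :
  (forall i, continuous (F i)) -> continuous (fun x => \sum_(i <- s) F i x).
Proof.
move=> cF; elim: s => [|a s IH].
  have -> : (fun x => \sum_(i <- [::]) F i x) = fun=> 0.
    by apply/funext => x; rewrite big_nil.
  exact: cst_continuous.
have -> : (fun x => \sum_(i <- a :: s) F i x) =
   (F a + (fun x => \sum_(i <- s) F i x))%R.
  by apply/funext => x; rewrite big_cons.
move=> x; apply: continuousD; [exact: cF | exact: IH].
Qed.

Lemma dotp_cont (y : 'rV[R]_n) : continuous (fun x : 'rV[R]_n => dotp x y).
Proof.
apply: cont_sum => i x; apply: (@continuousM R _ (fun x : 'rV[R]_n => x ord0 i)
  (fun=> y ord0 i)); [exact: coord_continuous | exact: cst_continuous].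
Qed.

Lemma refl_cont (v : 'rV[R]_n) : continuous (reflect_hyp v).
Proof.
move=> x; apply: (@continuousB _ _ _ id (fun x => (2 * dotp x v) *: v)).
  exact: cvg_id.
apply: (@continuousZr_tmp _ _ _ (fun x => 2 * dotp x v)).
apply: (@continuousM R _ (fun=> 2)); first exact: cst_continuous.
exact: dotp_cont.
Qed.

End Meas.
Section CV.
Context (R : realType) (n : nat) (S : set (Rn R n)) (mS : measurable S)
  (m : {measure set (Rn R n) -> \bar R}) (hmfin : (m S < +oo)%E)
  (sg : Rn R n -> Rn R n) (msg : measurable_fun setT sg)
  (sgS : forall x, S x -> S (sg x)) (sgK : forall x, sg (sg x) = x)
  (inv : forall A, measurable A -> A `<=` S -> m (sg @^-1` A `&` S) = m A).

Local Notation mu := (mfrestr mS hmfin).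

Lemma sgS_iff x : S (sg x) <-> S x.
Proof. by split => [/sgS|/sgS//]; rewrite sgK. Qed.

Lemma int_mu (g : Rn R n -> \bar R) :
  (\int[m]_(x in S) g x = \int[mu]_x (g \_ S) x)%E.
Proof.
rewrite (eq_measure_integral mu); last first.
  by move=> A mA AS; change (m A = m (A `&` S)); rewrite setIidl.
exact: integral_mkcond.
Qed.

Lemma CV (h : Rn R n -> R) : measurable_fun S h ->
  (exists M, forall x, S x -> `|h x| <= M) ->
  (\int[m]_(x in S) (h x)%:E = \int[m]_(x in S) (h (sg x))%:E)%E.
Proof.
move=> mh [M hM].
rewrite !int_mu.
pose g : Rn R n -> \bar R := (fun x => (h x)%:E) \_ S.
have -> : (fun x => (h (sg x))%:E) \_ S = g \o sg.
  apply/funext => x; rewrite /g /patch /=.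
  case: (pselect (S x)) => Sx.
    by rewrite !mem_set //; exact: sgS.
  by rewrite !memNset // => /sgS_iff.
have mg : measurable_fun [set: Rn R n] g.
  by apply/(measurable_restrictT _ mS)/measurable_EFinP.
have mgs : measurable_fun [set: Rn R n] (g \o sg) := measurableT_comp mg msg.
have -> : g \o sg = EFin \o ((h \_ S) \o sg).
  by apply/funext => x; rewrite /g /patch /=; case: ifPn.
have hgs : g \o sg = EFin \o ((h \_ S) \o sg).
  by apply/funext => x; rewrite /g /patch /=; case: ifPn.
have ig : mu.-integrable (sg @^-1` setT) (g \o sg).
  rewrite preimage_setT hgs; apply: measurable_bounded_integrable => //.
  - by change (m (setT `&` S) < +oo)%E; rewrite setTI.
  - apply: measurableT_comp => //; exact/(measurable_restrictT _ mS).
  - exists `|M|; split; first by rewrite num_real.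
    move=> y My x _ /=; rewrite /patch; case: ifPn => [/set_mem Sx|_].
      rewrite (le_trans (hM _ Sx)) //.
      by rewrite (le_trans (ler_norm M)) // ltW.
    by rewrite normr0 (le_trans _ (ltW My)).
rewrite -hgs.
transitivity (\int[pushforward mu sg]_(y in setT) g y)%E.
  apply: eq_measure_integral => A mA _.
  rewrite /pushforward.
  change (m (A `&` S) = m (sg @^-1` A `&` S)).
  rewrite -inv; [|exact: measurableI|exact: subIsetr].
  congr (m _); apply/seteqP; split => x /=.
    by move=> [[Ax _] Sx].
  by move=> [Ax Sx]; split => //; split => //; exact: sgS.
by rewrite integral_pushforward // preimage_setT.
Qed.
End CV.
Section MeasKop.
Context (R : realType) (n : nat) (S : set (Rn R n)) (mS : measurable S)
  (m : {measure set (Rn R n) -> \bar R}) (hmfin : (m S < +oo)%E)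
  (K : R -> R) (mK : measurable_fun setT K) (MK : R)
  (hK : forall t, `|K t| <= MK).

Local Notation mu := (mfrestr mS hmfin).

Lemma meas_coord (i : 'I_n) : measurable_fun [set: Rn R n] (fun x : Rn R n => x ord0 i).
Proof. by apply: meas_cont; exact: coord_continuous. Qed.

Lemma meas_dotp2 :
  measurable_fun [set: (Rn R n * Rn R n)%type] (fun p => dotp p.1 p.2).
Proof.
apply: measurable_sum => i.
apply: (@measurable_funM _ _ _ _ (fun p : (Rn R n * Rn R n)%type => p.1 ord0 i)
   (fun p : (Rn R n * Rn R n)%type => p.2 ord0 i)).
  exact: (measurableT_comp (meas_coord i) measurable_fst).
exact: (measurableT_comp (meas_coord i) measurable_snd).
Qed.

Lemma meas_Kop (g : Rn R n -> R) (mg : measurable_fun setT g) (Mg : R)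
  (hg : forall y, S y -> `|g y| <= Mg) :
  measurable_fun [set: Rn R n] (Kop S m K g).
Proof.
pose F : (Rn R n * Rn R n)%type -> \bar R :=
  fun p => (K (dotp p.1 p.2) * (g \_ S) p.2)%:E.
have -> : Kop S m K g = fine \o fubini_F mu F.
  apply/funext => x; rewrite /Kop /Rintegral /= /fubini_F.
  congr fine; rewrite (@int_mu _ _ _ mS _ hmfin); apply: eq_integral => y _.
  by rewrite /F /patch /=; case: ifPn => //; rewrite mulr0.
apply: measurableT_comp => //.
apply: (@measurable_fubini_F _ _ _ _ _ mu mu F).
have mF' : measurable_fun [set: (Rn R n * Rn R n)%type]
    (fun p : (Rn R n * Rn R n)%type => K (dotp p.1 p.2) * (g \_ S) p.2).
  apply: (@measurable_funM _ _ _ _ (fun p : (Rn R n * Rn R n)%type => K (dotp p.1 p.2))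
            (fun p : (Rn R n * Rn R n)%type => (g \_ S) p.2)).
    exact: (measurableT_comp mK meas_dotp2).
  apply: (measurableT_comp _ measurable_snd).
  exact/(measurable_restrictT _ mS)/measurable_funTS.
have -> : F = EFin \o (fun p => K (dotp p.1 p.2) * (g \_ S) p.2) by [].
apply: measurable_bounded_integrable => //.
- rewrite -setXTT.
  have E : ((mu \x mu) (setT `*` setT) = mu setT * mu setT)%E.
    exact: product_measure1E.
  have h1 : (mu setT < +oo)%E by change (m (setT `&` S) < +oo)%E; rewrite setTI.
  suff : ((mu \x mu) (setT `*` setT) < +oo)%E by [].
  by rewrite E lte_mul_pinfty // ?measure_ge0 // ge0_fin_numE // measure_ge0.
- exists (`|MK| * `|Mg|); split; first by rewrite num_real.
  move=> y hy [a b] _ /=; rewrite normrM (le_trans _ (ltW hy)) //.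
  rewrite ler_pM //; first by rewrite (le_trans (hK _)) // ler_norm.
  rewrite /patch; case: ifPn => [/set_mem Sb|_].
    by rewrite (le_trans (hg _ Sb)) // ler_norm.
  by rewrite normr0.
Qed.

End MeasKop.
Lemma uc_cont (R : realType) (Psi : R -> R) : unif_continuous Psi -> continuous Psi.
Proof.
move/unif_continuousP => H x; apply/cvgrPdist_lt => e e0.
have [d d0 hd] := H e e0.
apply/nbhs_ballP; exists d => // y xy.
exact: (hd (x, y) xy).
Qed.

Lemma convex_pair (R : realType) (Psi : R -> R) (a b c d : R) :
  convex_fun Psi -> a + b = c + d -> a <= c -> b <= c ->
  Psi a + Psi b <= Psi c + Psi d.
Proof.
move=> hc habcd hac hbc.
have [cd|cd] := eqVneq c d.
  have ha : a = c by lra.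
  have hb : b = c by lra.
  by rewrite ha hb -cd.
have dc : d < c by rewrite lt_neqAle eq_sym cd /=; lra.
pose t := (a - d) / (c - d).
have cd0 : c - d != 0 by rewrite subr_eq0.
have t0 : 0 <= t by rewrite divr_ge0 //; lra.
have t1 : t <= 1 by rewrite ler_pdivrMr ?subr_gt0 //; lra.
have ea : a = t * c + (1 - t) * d by rewrite /t; field.
have eb : b = (1 - t) * c + (1 - (1 - t)) * d.
  have -> : b = c + d - a by lra.
  by rewrite /t; field.
have h1 := hc c d t. have h2 := hc c d (1 - t).
have t0' : 0 <= 1 - t <= 1 by apply/andP; split; lra.
have t01 : 0 <= t <= 1 by apply/andP; split; lra.
move: (h1 t01) (h2 t0'); rewrite -ea -eb => {}h1 {}h2.
lra.
Qed.
Lemma alg_pair (R : realType) (K1 K2 u w p q : R) : p + q = u + w ->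
  ((K2 <= K1 /\ p = Num.max u w) \/ (K1 <= K2 /\ p = Num.min u w)) ->
  K1 * u + K2 * w <= K1 * p + K2 * q /\ K2 * u + K1 * w <= K1 * p + K2 * q.
Proof.
move=> hpq hc.
have -> : q = u + w - p by lra.
case: hc => [[hK ->]|[hK ->]].
  have hu : u <= Num.max u w by rewrite le_max lexx.
  have hw : w <= Num.max u w by rewrite le_max lexx orbT.
  by split; nra.
have hu : Num.min u w <= u by rewrite ge_min lexx.
have hw : Num.min u w <= w by rewrite ge_min lexx orbT.
by split; nra.
Qed.

Section Main.
Context (R : realType) (n : nat) (S : set (Rn R n)) (mS : measurable S)
  (m : {measure set (Rn R n) -> \bar R}) (hmfin : (m S < +oo)%E)
  (v : 'rV[R]_n) (hv : dotp v v = 1)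
  (sgS : forall x, S x -> S (reflect_hyp v x))
  (inv : forall A, measurable A -> A `<=` S ->
     m (reflect_hyp v @^-1` A `&` S) = m A)
  (K : R -> R) (mK : measurable_fun setT K) (MK : R)
  (hK : forall t, `|K t| <= MK) (hKmono : {homo K : s t / s <= t})
  (f : Rn R n -> R) (mf : measurable_fun setT f)
  (hf01 : forall x, S x -> 0 <= f x <= 1).

Local Notation sg := (reflect_hyp v).
Local Notation fs := (polarization v f).

Lemma msg : measurable_fun [set: Rn R n] (sg : Rn R n -> Rn R n).
Proof. apply: meas_cont_Rn; exact: refl_cont. Qed.

Lemma sgK x : sg (sg x) = x.
Proof. exact: reflK. Qed.

Lemma bint (h : Rn R n -> R) : measurable_fun setT h ->
  (exists M, forall y, S y -> `|h y| <= M) -> m.-integrable S (EFin \o h).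
Proof.
move=> mh [M hM]; apply: measurable_bounded_integrable => //.
  exact: measurable_funS mh.
exists `|M|; split; first by rewrite num_real.
move=> y My x Sx /=; rewrite (le_trans (hM _ Sx)) //.
by rewrite (le_trans (ler_norm M)) // ltW.
Qed.

Lemma RCV (h : Rn R n -> R) : measurable_fun setT h ->
  (exists M, forall y, S y -> `|h y| <= M) ->
  Rintegral m S h = Rintegral m S (h \o (sg : Rn R n -> Rn R n)).
Proof.
move=> mh hb; rewrite /Rintegral; congr fine.
apply: (@CV R n S mS m hmfin (reflect_hyp v) msg sgS sgK inv) => //.
exact: measurable_funS mh.
Qed.

Lemma sym_le (h1 h2 : Rn R n -> R) :
  measurable_fun setT h1 -> measurable_fun setT h2 ->
  (exists M, forall y, S y -> `|h1 y| <= M) ->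
  (exists M, forall y, S y -> `|h2 y| <= M) ->
  (forall y, S y -> h1 y + h1 (sg y) <= h2 y + h2 (sg y)) ->
  Rintegral m S h1 <= Rintegral m S h2.
Proof.
move=> m1 m2 [M1 b1] [M2 b2] hle.
have m1s : measurable_fun [set: Rn R n] (h1 \o (sg : Rn R n -> Rn R n)) := measurableT_comp m1 msg.
have m2s : measurable_fun [set: Rn R n] (h2 \o (sg : Rn R n -> Rn R n)) := measurableT_comp m2 msg.
have b1s : exists M, forall y, S y -> `|(h1 \o (sg : Rn R n -> Rn R n)) y| <= M.
  by exists M1 => y Sy; exact/b1/sgS.
have b2s : exists M, forall y, S y -> `|(h2 \o (sg : Rn R n -> Rn R n)) y| <= M.
  by exists M2 => y Sy; exact/b2/sgS.
have e1 := @RCV h1 m1 (ex_intro _ M1 b1).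
have e2 := @RCV h2 m2 (ex_intro _ M2 b2).
have i1 := @bint h1 m1 (ex_intro _ M1 b1).
have i2 := @bint h2 m2 (ex_intro _ M2 b2).
have i1s := @bint _ m1s b1s.
have i2s := @bint _ m2s b2s.
have : Rintegral m S (fun y => h1 y + (h1 \o (sg : Rn R n -> Rn R n)) y) <=
       Rintegral m S (fun y => h2 y + (h2 \o (sg : Rn R n -> Rn R n)) y).
  apply: le_Rintegral => //.
  - apply: bint; first exact: measurable_funD.
    exists (M1 + M1) => y Sy; rewrite (le_trans (ler_normD _ _)) // lerD //.
      exact: b1.
    exact/b1/sgS.
  - apply: bint; first exact: measurable_funD.
    exists (M2 + M2) => y Sy; rewrite (le_trans (ler_normD _ _)) // lerD //.
      exact: b2.
    exact/b2/sgS.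
rewrite !RintegralD // -e1 -e2.
lra.
Qed.

Lemma meas_dotp_r (x : 'rV[R]_n) :
  measurable_fun [set: Rn R n] (fun y : Rn R n => dotp x y).
Proof.
have -> : (fun y : Rn R n => dotp x y) = (fun y : 'rV[R]_n => dotp y x).
  by apply/funext => y; rewrite dotpC.
apply: meas_cont; exact: dotp_cont.
Qed.

Lemma meas_kint (g : Rn R n -> R) (x : 'rV[R]_n) : measurable_fun setT g ->
  measurable_fun [set: Rn R n] (fun y : Rn R n => K (dotp x y) * g y).
Proof.
move=> mg; apply: (@measurable_funM _ _ _ _ (fun y : Rn R n => K (dotp x y)) g) => //.
exact: (measurableT_comp mK (meas_dotp_r x)).
Qed.

Lemma bnd_kint (g : Rn R n -> R) (x : 'rV[R]_n) :
  (forall y, S y -> 0 <= g y <= 1) ->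
  exists M, forall y, S y -> `|K (dotp x y) * g y| <= M.
Proof.
move=> hg; exists MK => y Sy; rewrite normrM.
have /andP[g0 g1] := hg y Sy.
by rewrite (ger0_norm g0) -[MK]mulr1 ler_pM ?hK.
Qed.

Lemma mfs : measurable_fun [set: Rn R n] fs.
Proof.
rewrite /polarization.
have mfsg : measurable_fun [set: Rn R n] (f \o (sg : Rn R n -> Rn R n)).
  exact: measurableT_comp mf msg.
apply: measurable_fun_if => //.
- apply: (@measurable_fun_ler _ _ _ _ (cst 0) (fun y : Rn R n => dotp y v)).
    exact: measurable_cst.
  have -> : (fun y : Rn R n => dotp y v) = (fun y : Rn R n => dotp v y).
    by apply/funext => y; rewrite dotpC.
  exact: meas_dotp_r.
- apply: measurable_funS (measurable_maxr mf mfsg) => //.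
- apply: measurable_funS (measurable_minr mf mfsg) => //.
Qed.

Lemma fs01 y : S y -> 0 <= fs y <= 1.
Proof.
move=> Sy; have /andP[a0 a1] := hf01 _ Sy.
have /andP[b0 b1] := hf01 _ (sgS _ Sy).
rewrite /polarization; case: ifPn => _; apply/andP; split.
- by rewrite le_max a0.
- by rewrite ge_max a1 b1.
- by rewrite le_min a0 b0.
- by rewrite ge_min a1.
Qed.

Lemma refl0 y : dotp y v = 0 -> sg y = y.
Proof. by move=> h; rewrite /reflect_hyp h mulr0 scale0r subr0. Qed.

Lemma psum y : fs y + fs (sg y) = f y + f (sg y).
Proof.
rewrite /polarization refl_v // sgK oppr_ge0.
have [h|h|h] := ltgtP (dotp y v) 0.
- by rewrite maxC addr_min_max.
- by rewrite minC addrC addr_min_max addrC.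
- by rewrite (refl0 _ h) !maxxx.
Qed.

Lemma fs_case y : (0 <= dotp y v /\ fs y = Num.max (f y) (f (sg y))) \/
  (dotp y v < 0 /\ fs y = Num.min (f y) (f (sg y))).
Proof.
rewrite /polarization; case: leP => h; [left|right]; split => //.
Qed.

Lemma Kcmp x y : 0 <= dotp x v ->
  (0 <= dotp y v -> K (dotp x (sg y)) <= K (dotp x y)) /\
  (dotp y v < 0 -> K (dotp x y) <= K (dotp x (sg y))).
Proof.
move=> hx; have e : dotp x (sg y) = dotp x y - 2 * dotp y v * dotp x v.
  by rewrite dotpC dotp_refl_l (@dotpC _ _ y x) (@dotpC _ _ v x).
split => hy; apply: hKmono; rewrite e.
  have : 0 <= dotp y v * dotp x v by exact: mulr_ge0.
  lra.
have : dotp y v * dotp x v <= 0 by rewrite mulr_le0_ge0 // ltW.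
lra.
Qed.

Lemma hpt x y : 0 <= dotp x v -> S y ->
  let K1 := K (dotp x y) in let K2 := K (dotp x (sg y)) in
  [/\ K1 * f y + K2 * f (sg y) <= K1 * fs y + K2 * fs (sg y),
      K2 * f y + K1 * f (sg y) <= K1 * fs y + K2 * fs (sg y),
      K1 * fs y + K1 * fs (sg y) = K1 * f y + K1 * f (sg y) &
      K2 * fs y + K2 * fs (sg y) = K2 * f y + K2 * f (sg y)].
Proof.
move=> hx Sy K1 K2.
have hs := psum y.
have [h1 h2] : K1 * f y + K2 * f (sg y) <= K1 * fs y + K2 * fs (sg y) /\
    K2 * f y + K1 * f (sg y) <= K1 * fs y + K2 * fs (sg y).
  apply: alg_pair => //.
  have [hK1 hK2] := Kcmp x y hx.
  case: (fs_case y) => [[hy ->]|[hy ->]]; [left|right]; split => //.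
    exact: hK1.
  exact: hK2.
by split => //; rewrite -!mulrDr hs.
Qed.

Lemma inner x : 0 <= dotp x v ->
  Kop S m K f x + Kop S m K f (sg x) = Kop S m K fs x + Kop S m K fs (sg x) /\
  Kop S m K f x <= Kop S m K fs x /\ Kop S m K f (sg x) <= Kop S m K fs x.
Proof.
move=> hx.
have mA := meas_kint _ x mf.
have mB := meas_kint _ (sg x) mf.
have mC := meas_kint _ x mfs.
have mD := meas_kint _ (sg x) mfs.
have bA := bnd_kint _ x hf01.
have bB := bnd_kint _ (sg x) hf01.
have bC := bnd_kint _ x fs01.
have bD := bnd_kint _ (sg x) fs01.
have e2 y : dotp (sg x) (sg y) = dotp x y by exact: dotp_refl2.
have e1 y : dotp (sg x) y = dotp x (sg y) by exact: dotp_refl_sym.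
split; last split.
- rewrite /Kop -!RintegralD //; try exact: bint.
  apply/eqP; rewrite eq_le; apply/andP; split; apply: sym_le.
  + exact: measurable_funD.
  + exact: measurable_funD.
  + case: bA => M1 hA; case: bB => M2 hB; exists (M1 + M2) => y Sy.
    by rewrite (le_trans (ler_normD _ _)) // lerD ?hA ?hB.
  + case: bC => M1 hA; case: bD => M2 hB; exists (M1 + M2) => y Sy.
    by rewrite (le_trans (ler_normD _ _)) // lerD ?hA ?hB.
  + move=> y Sy; rewrite !e2 !e1.
    have [_ _ h3 h4] := hpt x y hx Sy; lra.
  + exact: measurable_funD.
  + exact: measurable_funD.
  + case: bC => M1 hA; case: bD => M2 hB; exists (M1 + M2) => y Sy.
    by rewrite (le_trans (ler_normD _ _)) // lerD ?hA ?hB.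
  + case: bA => M1 hA; case: bB => M2 hB; exists (M1 + M2) => y Sy.
    by rewrite (le_trans (ler_normD _ _)) // lerD ?hA ?hB.
  + move=> y Sy; rewrite !e2 !e1.
    have [_ _ h3 h4] := hpt x y hx Sy; lra.
- apply: sym_le => // y Sy.
  by have [h1 _ _ _] := hpt x y hx Sy.
- apply: sym_le => // y Sy; rewrite !e2 !e1.
  by have [_ h2 _ _] := hpt x y hx Sy.
Qed.

Lemma Kop_bnd (g : Rn R n -> R) : measurable_fun setT g -> (forall y, S y -> 0 <= g y <= 1) ->
  forall x, `|Kop S m K g x| <= MK * fine (m S).
Proof.
move=> mg hg x; rewrite /Kop.
have [M hM] := bnd_kint g x hg.
have ik := @bint _ (meas_kint g x mg) (ex_intro _ M hM).
rewrite (le_trans (le_normr_Rintegral mS ik)) //.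
rewrite -Rintegral_cst //; apply: le_Rintegral => //.
- apply: bint; first exact: (measurableT_comp _ (meas_kint g x mg)).
  by exists M => y Sy; rewrite normr_id; exact: hM.
- apply: bint; first exact: measurable_cst.
  by exists `|MK| => y _.
- move=> y Sy; rewrite normrM.
  have /andP[g0 g1] := hg y Sy.
  by rewrite (ger0_norm g0) -[MK]mulr1 ler_pM ?hK.
Qed.

Context (Psi : R -> R) (hcvx : convex_fun Psi) (hcont : continuous Psi).

Lemma Psi_bnd (B : R) : 0 < B -> exists M, forall t, `|t| <= B -> `|Psi t| <= M.
Proof.
move=> B0; pose U := Num.max (Psi B) (Psi (-B)).
have up t : `|t| <= B -> Psi t <= U.
  move=> tB; pose l := (t + B) / (2 * B).
  have hB : 2 * B != 0 by rewrite mulf_neq0 // gt_eqF.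
  have [tl tu] : - B <= t /\ t <= B.
    by move: tB; rewrite ler_norml => /andP[].
  have l0 : 0 <= l by rewrite divr_ge0 //; lra.
  have l1 : l <= 1 by rewrite ler_pdivrMr ?mulr_gt0 //; lra.
  have B0n : B != 0 by rewrite gt_eqF.
  have et : t = l * B + (1 - l) * (- B) by rewrite /l; field.
  have hU1 : Psi B <= U by rewrite le_max lexx.
  have hU2 : Psi (- B) <= U by rewrite le_max lexx orbT.
  have := hcvx B (- B) l; rewrite -et => /(_ (introT andP (conj l0 l1))) H.
  nra.
have lo t : `|t| <= B -> 2 * Psi 0 - U <= Psi t.
  move=> tB; have h2 : 0 <= (2^-1 : R) <= 1 by apply/andP; split; lra.
  have := hcvx t (- t) (2^-1) h2.
  have -> : 2^-1 * t + (1 - 2^-1) * - t = 0 by field.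
  have := up (- t); rewrite normrN => /(_ tB) H1 H2.
  lra.
exists (`|U| + `|2 * Psi 0 - U|) => t tB.
rewrite ler_norml; have := up t tB; have := lo t tB.
have := ler_norm U; have := ler_norm (- U); rewrite normrN.
have := ler_norm (2 * Psi 0 - U); have := ler_norm (- (2 * Psi 0 - U)); rewrite normrN.
move=> *; apply/andP; split; lra.
Qed.

Lemma outer :
  (\int[m]_(x in S) (Psi (Kop S m K f x))%:E <=
   \int[m]_(x in S) (Psi (Kop S m K fs x))%:E)%E.
Proof.
have mF (g : Rn R n -> R) : measurable_fun setT g ->
    (forall y, S y -> 0 <= g y <= 1) ->
    measurable_fun [set: Rn R n] (fun x => Psi (Kop S m K g x)).
  move=> mg hg; apply: (measurableT_comp (continuous_measurable_fun hcont)).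
  apply: (@meas_Kop R n S mS m hmfin K mK MK hK g mg 1) => y Sy.
  by have /andP[g0 g1] := hg y Sy; rewrite ger0_norm.
have bF (g : Rn R n -> R) : measurable_fun setT g ->
    (forall y, S y -> 0 <= g y <= 1) ->
    exists M, forall y, S y -> `|Psi (Kop S m K g y)| <= M.
  move=> mg hg.
  have MK0 : 0 <= MK by rewrite (le_trans _ (hK 0)).
  have mS0 : 0 <= fine (m S) by rewrite fine_ge0 // measure_ge0.
  have pm : 0 <= MK * fine (m S) by exact: mulr_ge0.
  have [M hM] := @Psi_bnd (MK * fine (m S) + 1) ltac:(lra).
  exists M => y _; apply: hM; rewrite (le_trans (Kop_bnd g mg hg y)) //; lra.
have key : Rintegral m S (fun x => Psi (Kop S m K f x)) <=
           Rintegral m S (fun x => Psi (Kop S m K fs x)).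
  apply: sym_le; [exact: mF f mf hf01|exact: mF fs mfs fs01|
                  exact: bF f mf hf01|exact: bF fs mfs fs01|].
  move=> y Sy /=.
  have [hy|hy] := leP 0 (dotp y v).
    have [e [h1 h2]] := inner y hy.
    exact: convex_pair.
  have hy' : 0 <= dotp (sg y) v by rewrite refl_v // oppr_ge0 ltW.
  have [e [h1 h2]] := inner (sg y) hy'.
  rewrite sgK in e h1 h2.
  rewrite addrC [X in _ <= X]addrC.
  exact: convex_pair.
have ie (g : Rn R n -> R) : measurable_fun setT g ->
    (forall y, S y -> 0 <= g y <= 1) ->
    (\int[m]_(x in S) (Psi (Kop S m K g x))%:E =
     (Rintegral m S (fun x => Psi (Kop S m K g x)))%:E)%E.
  move=> mg hg; rewrite /Rintegral fineK //.
  apply: integrable_fin_num.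
  by []. exact: (@bint _ (mF g mg hg) (bF g mg hg)).
by rewrite (ie f mf hf01) (ie fs mfs fs01) lee_fin.
Qed.
End Main.
Lemma sphere_meas (R : realType) (n : nat) (rad : R) :
  measurable (@sphere R n rad).
Proof.
have hc : continuous (fun x : 'rV[R]_n => Num.sqrt (dotp x x)).
  move=> x; apply: continuous_comp; last exact: sqrt_continuous.
  apply: (@cont_sum _ _ _ _ (fun i (x : 'rV[R]_n) => x ord0 i * x ord0 i)) => i y.
  by apply: continuousM; exact: coord_continuous.
have := @meas_cont R n _ hc measurableT [set rad] (measurable_set1 rad).
by rewrite setTI.
Qed.

Theorem theorem5 (R : realType) (k : nat) (hn : (1 <= k)%N) (rad : R)
    (hrad : 0 < rad)
    (m : {measure set (Rn R k.+1) -> \bar R})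
    (hmfin : (m (@sphere R k.+1 rad) < +oo)%E)
    (hminv : rotation_invariant_on (@sphere R k.+1 rad) m)
    (Psi : R -> R) (hPsi_cvx : convex_fun Psi) (hPsi_uc : unif_continuous Psi)
    (f : Rn R k.+1 -> R)
    (hf01 : forall x, @sphere R k.+1 rad x -> 0 <= f x <= 1)
    (hfint : m.-integrable (@sphere R k.+1 rad) (fun x => (f x)%:E))
    (K : R -> R) (hKmono : {homo K : s t / s <= t})
    (hKbdd : exists M : R, forall t, `|K t| <= M)
    (hKmeas : measurable_fun [set: R] K)
    (v : 'rV[R]_k.+1) (hv : dotp v v = 1) (hvr : 0 < dotp v (@north R k rad)) :
  (\int[m]_(x in @sphere R k.+1 rad) (Psi (Kop (@sphere R k.+1 rad) m K f x))%:E
   <= \int[m]_(x in @sphere R k.+1 rad)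
        (Psi (Kop (@sphere R k.+1 rad) m K (polarization v f) x))%:E)%E.
Proof.
set S := @sphere R k.+1 rad.
have mS : measurable S by exact: sphere_meas.
have mfS : measurable_fun S f.
  by apply/measurable_EFinP; exact: (measurable_int _ hfint).
pose f' := f \_ S.
have mf' : measurable_fun setT f' by exact/(measurable_restrictT _ mS).
have f'E y : S y -> f' y = f y by move=> Sy; rewrite /f' /patch mem_set.
have hf01' y : S y -> 0 <= f' y <= 1 by move=> Sy; rewrite f'E //; exact: hf01.
have sgS x : S x -> S (reflect_hyp v x).
  by rewrite /S /sphere /= dotp_refl2.
have inv A : measurable A -> A `<=` S ->
    m (reflect_hyp v @^-1` A `&` S) = m A.
  move=> mA AS; rewrite -(hminv _ (reflQ_orth _ _ _ hv) A mA AS).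
  congr (m (_ `&` _)); apply/seteqP; split => x /=; by rewrite refl_mx.
have [MK hK] := hKbdd.
have := @outer R k.+1 S mS m hmfin v hv sgS inv K hKmeas MK hK hKmono f' mf'
  hf01' Psi hPsi_cvx (uc_cont _ _ hPsi_uc).
have -> : Kop S m K f' = Kop S m K f.
  apply/funext => x; apply: eq_Rintegral => y /set_mem Sy.
  by rewrite f'E.
have -> : Kop S m K (polarization v f') = Kop S m K (polarization v f).
  apply/funext => x; apply: eq_Rintegral => y /set_mem Sy.
  by rewrite /polarization !f'E //; exact: sgS.
by [].
Qed.
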